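(* Let $G=H\langle a\rangle$ be a finite group, where $H$ is a normal subgroup of $G$ and the order of $a$ is coprime to $|H|$. Then $\langle \mathcal R(a)\rangle=[H,a]$.
   Context: Commutators: $[x,y]=x^{-1}y^{-1}xy$, left-normed, and $[x,{}_n\,y]=[x,y,\dots,y]$ with $y$ repeated $n$ times. $\mathcal R(a)$ denotes the minimal right Engel sink of $a$ in $G$: the smallest subset of $G$ such that for every $x\in G$ the commutators $[a,{}_n\,x]$ lie in it for all sufficiently large $n$. $[H,a]$ denotes the subgroup generated by all $h^{-1}h^{a}$, $h\in H$. *)

(* Defs.v *)
From mathcomp Require Import all_boot all_fingroup.
Set Implicit Arguments. Unset Strict Implicit. Unset Printing Implicit Defensive.
Local Open Scope group_scope.

(* Left-normed iterated commutator [a, _n x] = [a, x, ..., x] (n copies of x).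
   MathComp's [~ g, x] is g^-1 * x^-1 * g * x, matching the paper. *)
Definition engel_comm (gT : finGroupType) (a x : gT) (n : nat) : gT :=
  iter n (fun g => [~ g, x]) a.

Definition right_engel_sink (gT : finGroupType) (G : {set gT}) (a : gT)
    (S : {set gT}) : Prop :=
  S \subset G /\
  forall x, x \in G -> exists N, forall n, N <= n -> engel_comm a x n \in S.

Definition min_right_engel_sink (gT : finGroupType) (G : {set gT}) (a : gT)
    (R : {set gT}) : Prop :=
  right_engel_sink G a R /\ forall S, right_engel_sink G a S -> R \subset S.

Definition commg_elt (gT : finGroupType) (H : {set gT}) (a : gT) : {set gT} :=
  <<[set [~ h, a] | h in H]>>.

(* Main.v *)
Require Import Defs.
From mathcomp Require Import all_boot all_fingroup.
From mathcomp Require Import all_solvable.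
Set Implicit Arguments. Unset Strict Implicit. Unset Printing Implicit Defensive.
Local Open Scope group_scope.

Lemma iter_inj_in (T : Type) (V : pred T) (f : T -> T) :
  {in V, forall v, V (f v)} -> {in V &, injective f} ->
  forall i x y, V x -> V y -> iter i f x = iter i f y -> x = y.
Proof.
move=> fV finj; elim=> [|i IH] x y Vx Vy //=.
have iV : forall k z, V z -> V (iter k f z).
  by elim=> [|k IHk] z Vz //=; apply: fV; apply: IHk.
move=> /finj-/(_ (iV _ _ Vx) (iV _ _ Vy)); exact: IH.
Qed.

Lemma inj_periodic (T : finType) (V : {set T}) (f : T -> T) :
  {in V, forall v, f v \in V} -> {in V &, injective f} ->
  forall v, v \in V -> exists2 q, 0 < q & iter q f v = v.
Proof.
move=> fV finj v Vv.
have iV : forall k, iter k f v \in V.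
  by elim=> [|k IHk] //=; apply: fV.
pose g (i : 'I_#|V|.+1) := iter i f v.
have : ~~ injectiveb g.
  apply/negP => /injectiveP ginj.
  have := card_imset (mem [set: 'I_#|V|.+1]) ginj.
  rewrite cardsT card_ord => himg.
  have : #|g @: [set: 'I_#|V|.+1]| <= #|V|.
    apply: subset_leq_card; apply/subsetP => _ /imsetP[i _ ->]; exact: iV.
  by rewrite himg ltnn.
case/injectivePn => i [j neqij eqij].
wlog ltij : i j neqij eqij / i < j.
  move=> W; case: (ltngtP i j) => [lt|gt|eq]; first exact: (W i j).
    by apply: (W j i) => //; rewrite eq_sym.
  by move: neqij; rewrite -(inj_eq val_inj) /= eq eqxx.
exists (j - i); first by rewrite subn_gt0.
have : iter i f (iter (j - i) f v) = iter i f v.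
  by rewrite -iterD subnKC ?(ltnW ltij) //; symmetry.
apply: (@iter_inj_in _ (mem V)) => //; exact: iV.
Qed.

Lemma iter_mul_periodic (T : Type) (f : T -> T) q v :
  iter q f v = v -> forall k, iter (k * q) f v = v.
Proof.
move=> hq; elim=> [|k IHk] //=; by rewrite mulSn iterD IHk hq.
Qed.

Lemma commg_elt_norm (gT : finGroupType) (H : {group gT}) (a : gT) :
  a \in 'N(H) -> a \in 'N(commg_elt H a).
Proof.
move=> nHa; rewrite /commg_elt.
suff nX : <[a]> \subset 'N([set [~ h, a] | h in H]).
  exact: (subsetP (norms_gen nX)) a (cycle_id a).
rewrite cycle_subG; apply/normP.
have sub : [set [~ h, a] | h in H] :^ a \subset [set [~ h, a] | h in H].
  apply/subsetP => _ /imsetP[_ /imsetP[h Hh ->] ->].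
  by rewrite conjRg [a ^ a]conjgE mulKg; apply: imset_f; rewrite memJ_norm.
by apply/eqP; rewrite eqEcard sub cardJg leqnn.
Qed.

Lemma commg_eltE (gT : finGroupType) (H : {group gT}) (a : gT) :
  a \in 'N(H) -> commg_elt H a = [~: H, <[a]>].
Proof.
move=> nHa; apply/eqP; rewrite eqEsubset; apply/andP; split.
  rewrite /commg_elt gen_subG; apply/subsetP => _ /imsetP[h Hh ->].
  by apply: mem_commg => //; exact: cycle_id.
rewrite gen_subG; apply/subsetP => _ /imset2P[h y Hh /cycleP[k ->] ->].
elim: k => [|k IHk]; first by rewrite expg0 commg1 group1.
rewrite expgSr commgMJ groupM //.
  by rewrite /commg_elt mem_gen //; apply: imset_f.
by rewrite memJ_norm // commg_elt_norm.
Qed.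

Lemma engel_first (gT : finGroupType) (a h : gT) :
  [~ a, (a^-1) ^ h] = [~ [~ h, a], (a^-1) ^ h].
Proof.
rewrite /commg /conjg !invMg !invgK !mulgA.
rewrite !(mulgKV, mulgK).
done.
Qed.

Lemma engel_conj (gT : finGroupType) (a h : gT) n :
  engel_comm a ((a^-1) ^ h) n.+1 = iter n.+1 (fun g => [~ g, (a^-1) ^ h]) [~ h, a].
Proof. by rewrite /engel_comm !iterSr engel_first. Qed.

Lemma frattini_step (gT : finGroupType) (a : gT) (S : {set gT}) (H : {group gT}) (p : nat) :
  p.-group H -> a \in 'N(H) -> coprime #|H| #[a] -> [~: H, <[a]>] = H ->
  (forall h, h \in H -> exists N, forall n, N <= n -> engel_comm a ((a^-1) ^ h) n \in S) ->
  H \subset <<S>>.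
Proof.
move=> pH nHa coHa defH hS.
set N := 'Phi(H).
have nNH : H \subset 'N(N) := normal_norm (Phi_normal H).
have nNG : forall y, y \in 'N(H) -> y \in 'N(N).
  move=> y Ny; rewrite -cycle_subG; apply: char_norm_trans (Phi_char H) _.
  by rewrite cycle_subG.
set A := <[a]>.
have nNa : a \in 'N(N) by apply: nNG.
have nNA : A \subset 'N(N) by rewrite cycle_subG.
have nHA : A \subset 'N(H) by rewrite cycle_subG.
set V := H / N.
have abV : abelian V := abelem_abelian (Phi_quotient_abelem pH).
have coVA : coprime #|V| #|A / N| by apply: coprime_morph; rewrite -orderE.
have nVA : A / N \subset 'N(V) by apply: quotient_norms.
have defV : [~: V, A / N] = V by rewrite -quotientR // defH.
have cVA : 'C_V(A / N) = 1.
  by have := coprime_abel_cent_TI nVA coVA abV; rewrite defV.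
suff sHX : H \subset 'Phi(H) <*> (S :&: H).
  have eqH : <<S :&: H>> = H.
    apply: Phi_nongen; apply/eqP; rewrite eqEsubset sHX andbT.
    by rewrite join_subG Phi_sub subsetIr.
  by rewrite -eqH genS // subsetIl.
rewrite -{1}defH -commg_eltE // /commg_elt gen_subG.
apply/subsetP => _ /imsetP[h Hh ->].
set t := [~ h, a]; set x := (a^-1) ^ h.
have nHh : h \in 'N(H) := subsetP (normG H) h Hh.
have nHx : x \in 'N(H) by rewrite groupJ ?groupV.
have nNx : x \in 'N(N) := nNG x nHx.
have nNh : h \in 'N(N) := subsetP nNH h Hh.
have Ht : t \in H by rewrite /t commgEl groupM ?groupV // memJ_norm.
set f := fun g => [~ g, x].
have fH : forall g, g \in H -> f g \in H.
  by move=> g Hg; rewrite /f commgEl groupM ?groupV // memJ_norm.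
have iH : forall n, iter n f t \in H.
  by elim=> [|n IHn] //=; apply: fH.
set xb := coset N x.
set fb := fun g => [~ g, xb].
have coset_iter : forall n, coset N (iter n f t) = iter n fb (coset N t).
  elim=> [|n IHn] //=; rewrite -IHn /f morphR //=.
  exact: subsetP nNH _ (iH n).
have xbV : xb \in 'N(V).
  have : <[x]> / N \subset 'N(V) by apply: quotient_norms; rewrite cycle_subG.
  by move/subsetP; apply; apply: mem_quotient; apply: cycle_id.
have fbV : {in V, forall v, fb v \in V}.
  by move=> v Vv; rewrite /fb commgEl groupM ?groupV // memJ_norm.
have fbinj : {in V &, injective fb}.
  move=> u v Vu Vv; rewrite /fb !commgEl => euv.
  have cy : (v * u^-1) ^ xb = v * u^-1.
    rewrite conjMg conjVg.
    have e : v * (u^-1 * u ^ xb) * (u ^ xb)^-1 = v * (v^-1 * v ^ xb) * (u ^ xb)^-1.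
      by rewrite euv.
    rewrite mulKVg (mulgA v u^-1) mulgK in e.
    by rewrite -e.
  set y := v * u^-1 in cy.
  have Vy : y \in V by rewrite /y groupM ?groupV.
  set hb := coset N h.
  set ab := coset N a.
  have Vhb : hb \in V by apply: mem_quotient.
  have exb : xb = (ab^-1) ^ hb.
    by rewrite /xb /x morphJ ?groupV // morphV.
  set z := y ^ (hb^-1).
  have cz : z ^ ab = z.
    have e1 : z ^ (ab^-1) = z.
      rewrite /z -conjgM.
      have -> : hb^-1 * ab^-1 = (ab^-1) ^ hb * hb^-1.
        by rewrite conjgE mulgA mulgK.
      by rewrite conjgM -exb cy.
    by rewrite -{1}e1 conjgKV.
  have Cz : z \in 'C_V(A / N).
    rewrite inE /z memJ_norm ?groupV ?Vy //=; last exact: subsetP (normG V) _ Vhb.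
    rewrite /A quotient_cycle // cent_cycle; apply/cent1P.
    by apply/commgP; rewrite commgEl cz mulVg.
  move: Cz; rewrite cVA => /set1P /eqP; rewrite /z conjg_eq1 /y -eq_mulgV1.
  by move/eqP.
have [q q0 hq] := inj_periodic fbV fbinj (mem_quotient N Ht).
have [N0 hN0] := hS h Hh.
set n := (N0.+1 * q)%N.
have n0 : 0 < n by rewrite /n muln_gt0.
have nge : N0 <= n by rewrite /n (leq_trans (leqnSn N0)) // leq_pmulr.
have Sw : iter n f t \in S.
  by rewrite -(prednK n0) -engel_conj (prednK n0); apply: hN0.
have cw : coset N (iter n f t) = coset N t by rewrite coset_iter iter_mul_periodic.
have : t \in N :* (iter n f t).
  rewrite -val_coset; last exact: subsetP nNH _ (iH n).
  by rewrite cw val_coset ?rcoset_refl //; apply: subsetP nNH _ Ht.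
case/rcosetP => phi Nphi ->.
rewrite groupM //; first exact: subsetP (joing_subl _ _) _ Nphi.
by apply: (subsetP (joing_subr _ _)); rewrite inE Sw iH.
Qed.

Lemma coprime_cent_comm_prod (gT : finGroupType) (A H : {group gT}) :
  solvable A -> A \subset 'N(H) -> coprime #|H| #|A| ->
  'C_H(A) * [~: H, A] = H.
Proof.
move=> solA nHA coHA.
have sMH : [~: H, A] \subset H by rewrite commg_subl.
have nMH : H \subset 'N([~: H, A]) by apply: commg_norml.
have nMA : A \subset 'N([~: H, A]) by apply: commg_normr.
have qc := @strongest_coprime_quotient_cent _ A H [~: H, A] nMA.
rewrite setIid in qc.
have {}qc := qc sMH (coprimeSg sMH coHA) (introT orP (or_intror solA)).
have cHA : H / [~: H, A] \subset 'C(A / [~: H, A]) by apply: quotient_cents2r.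
rewrite (setIidPl cHA) in qc.
have sHMC : H \subset [~: H, A] * 'C_H(A).
  by rewrite -quotientSK // qc.
have nMC : 'C_H(A) \subset 'N([~: H, A]) := subset_trans (subsetIl _ _) nMH.
apply/eqP; rewrite eqEsubset (normC nMC) sHMC andbT.
by rewrite mul_subG // subsetIl.
Qed.

Lemma comm_absorb (gT : finGroupType) (A H L : {group gT}) :
  A \subset 'N(L) -> H \subset 'C_H(A) * L -> [~: H, A] \subset L.
Proof.
move=> nLA sH; rewrite gen_subG; apply/subsetP => _ /imset2P[y z Hy Az ->].
have /mulsgP[c l Cc Ll ->] := subsetP sH y Hy.
have [_ cAc] := setIP Cc.
rewrite commMgJ.
have -> : [~ c, z] = 1 by apply/eqP/commgP; exact: (centP cAc) z Az.
rewrite conj1g mul1g commgEl groupM ?groupV // memJ_norm //.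
exact: subsetP nLA z Az.
Qed.

Lemma key_sub (gT : finGroupType) (a : gT) (S : {set gT}) (H : {group gT}) :
  a \in 'N(H) -> coprime #|H| #[a] ->
  (forall h, h \in H -> exists N, forall n, N <= n -> engel_comm a ((a^-1) ^ h) n \in S) ->
  [~: H, <[a]>] \subset <<S>>.
Proof.
have [m] := ubnP #|H|; elim: m H => // m IHm H /ltnSE leHm nHa coHa hS.
set A := <[a]>.
have nHA : A \subset 'N(H) by rewrite cycle_subG.
have coHA : coprime #|H| #|A| by rewrite -orderE.
have solA : solvable A by apply: abelian_sol; apply: cycle_abelian.
have IH : forall H0 : {group gT}, H0 \proper H -> A \subset 'N(H0) ->
    [~: H0, A] \subset <<S>>.
  move=> H0 pH0 nH0A; have sH0 := proper_sub pH0.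
  apply: IHm.
  - exact: leq_trans (proper_card pH0) leHm.
  - by rewrite -cycle_subG.
  - by rewrite (coprimeSg sH0).
  - by move=> h H0h; apply: hS; exact: subsetP sH0 h H0h.
have [-> | ntH] := eqsVneq H 1; first by rewrite comm1G sub1G.
set C := 'C_H(A).
have defH : C * [~: H, A] = H := coprime_cent_comm_prod solA nHA coHA.
set p := pdiv #|H|.
have [pH | npH] := boolP (p.-group H).
  have sMH : [~: H, A] \subset H by rewrite commg_subl.
  case: (eqVproper sMH) => [eMH | pMH].
    by rewrite eMH; apply: (frattini_step pH nHa coHa eMH hS).
  have nMA : A \subset 'N([~: H, A]) := commg_normr _ _.
  apply: subset_trans (IH _ pMH nMA).
  apply: comm_absorb; first exact: commg_normr.
  have defM := coprime_cent_comm_prod solA nMA (coprimeSg sMH coHA).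
  have sH : H \subset C * ('C_[~: H, A](A) * [~: [~: H, A], A]).
    by rewrite defM defH.
  apply: subset_trans sH _; rewrite mulgA mulGSid //.
  exact: setSI sMH.
set J := <<\bigcup_(H0 : {group gT} | (H0 \proper H) && (A \subset 'N(H0)))
            [~: H0, A]>>.
have sJS : J \subset <<S>>.
  by rewrite gen_subG; apply/bigcupsP => H0 /andP[pH0 nH0A]; exact: IH.
have sJH : J \subset H.
  rewrite gen_subG; apply/bigcupsP => H0 /andP[pH0 nH0A].
  by rewrite (subset_trans _ (proper_sub pH0)) // commg_subl.
have nJA : A \subset 'N(J).
  apply: norms_gen; apply: norms_bigcup; apply/bigcapsP => H0 _.
  exact: commg_normr.
have nJC : C \subset 'N(J).
  apply/subsetP => c Cc; have [Hc cAc] := setIP Cc.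
  have nAc : A :^ c = A by apply/normP; exact: subsetP (cent_sub A) c cAc.
  have sub : J :^ c \subset J.
    rewrite /J -genJ genS //.
    apply/subsetP => _ /imsetP[y /bigcupP[H0 /andP[pH0 nH0A] yH0] ->].
    apply/bigcupP; exists (H0 :^ c)%G.
      rewrite /= -(conjGid Hc) properJ pH0 /= normJ -nAc.
      by rewrite conjSg.
    by rewrite /= -nAc -conjsRg memJ_conjg.
  by apply/normP; apply/eqP; rewrite eqEcard sub cardJg leqnn.
have sHCJ : H \subset C * J.
  have eL : (C <*> J)%G :=: C * J by rewrite /= norm_joinEl.
  rewrite -eL; apply/negPn/negP => nsHL.
  have sLH : (C <*> J)%G \subset H by rewrite join_subG subsetIl sJH.
  have iL : 1 < #|H : C <*> J| by rewrite indexg_gt1.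
  set q := pdiv #|H : C <*> J|.
  have [Q sylQ nQA] := sol_coprime_Sylow_exists q solA nHA coHA.
  have sQH := pHall_sub sylQ.
  have pQH : Q \proper H.
    rewrite properEneq sQH andbT; apply/eqP => eQH.
    have qH : q.-group H by rewrite -eQH; exact: pHall_pgroup sylQ.
    have pq : p \in (q : nat_pred).
      apply: pnatPpi qH _; rewrite pi_pdiv cardG_gt1 //.
    move: npH; rewrite inE in pq; by rewrite (eqP pq) qH.
  have sQJ : [~: Q, A] \subset J.
    apply: subset_trans (subset_gen _).
    apply: (bigcup_sup Q); by rewrite pQH nQA.
  have sQL : Q \subset C <*> J.
    rewrite eL -{1}(coprime_cent_comm_prod solA nQA (coprimeSg sQH coHA)).
    by rewrite mulgSS // setSI.
  case/and3P: sylQ => _ _ q'HQ.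
  have q'HL : q^'.-nat #|H : C <*> J|.
    apply: pnat_dvd q'HQ.
    by rewrite -(Lagrange_index sLH sQL) dvdn_mulr.
  have := pnatPpi q'HL (p := q); rewrite pi_pdiv iL => /(_ isT).
  by rewrite !inE eqxx.
apply: subset_trans sJS; exact: comm_absorb nJA sHCJ.
Qed.

Unset Implicit Arguments. Set Strict Implicit.

Theorem lemma2p5 (gT : finGroupType) (G H : {group gT}) (a : gT) (R : {set gT}) :
  H <| G -> H * <[a]> = G -> coprime #|H| #[a] ->
  min_right_engel_sink G a R ->
  <<R>> = commg_elt H a.
Proof.
move=> nsHG defG coHa [[sRG sinkR] minR].
have sHG : H \subset G := normal_sub nsHG.
have aG : a \in G by rewrite -defG; apply: (subsetP (mulG_subr _ _)); exact: cycle_id.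
have nHa : a \in 'N(H) := subsetP (normal_norm nsHG) a aG.
have defM := commg_eltE nHa.
have nsMG : [~: H, <[a]>] <| G.
  have := commg_normal H <[a]>%G.
  by rewrite /= norm_joinEr ?cycle_subG // defG.
apply/eqP; rewrite eqEsubset; apply/andP; split.
  rewrite defM gen_subG; apply: minR; split.
    rewrite gen_subG; apply/subsetP => _ /imset2P[h y Hh Ay ->].
    apply: groupR; first exact: subsetP sHG h Hh.
    by move: Ay => /cycleP[k ->]; rewrite groupX.
  move=> x Gx; exists 1%N => n; case: n => // n _.
  elim: n => [|n IHn].
    rewrite /engel_comm /= ; move: Gx; rewrite -defG => /mulsgP[h y Hh Ay ->].
    rewrite commgMJ.
    have -> : [~ a, y] = 1.
      apply/eqP/commgP; move: Ay => /cycleP[k ->]; exact: commuteX.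
    rewrite mul1g memJ_norm; last first.
      apply: (subsetP (normal_norm nsMG)); rewrite -defG; exact: (subsetP (mulG_subr _ _)) y Ay.
    by rewrite -invgR groupV mem_commg // cycle_id.
  rewrite /engel_comm iterS -/(engel_comm a x n.+1) commgEl groupM ?groupV //.
  by rewrite memJ_norm //; exact: subsetP (normal_norm nsMG) x Gx.
rewrite defM; apply: key_sub nHa coHa _ => h Hh.
apply: sinkR; rewrite groupJ ?groupV //; exact: subsetP sHG h Hh.
Qed.
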